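(* $$\sum_{k=1}^\infty\frac{26975k^2-17111k+2968}{k(-8)^k\binom{4k}k}=-297-120\log2.$$ *)

(* Defs.v *)
From Stdlib Require Import Reals.
From Coquelicot Require Import Coquelicot.
Open Scope R_scope.

Definition term (k : nat) : R :=
  (26975 * INR k ^ 2 - 17111 * INR k + 2968)
  / (INR k * (-8) ^ k * Binomial.C (4 * k) k).

(* Main.v *)
Require Import Defs.
From Stdlib Require Import Reals.
From Coquelicot Require Import Coquelicot.
From Stdlib Require Import Lra Lia Factorial.
Open Scope R_scope.


Ltac fixINR := repeat match goal with |- context [match ?n with 0%nat => 1 | S _ => INR ?n + 1 end] => change (match n with 0%nat => 1 | S _ => INR n + 1 end) with (INR (S n)) end; rewrite ?S_INR; change RinvImpl.Rinv with Rinv.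

Ltac abspow := simpl pow; unfold Rminus; repeat match goal with |- context [?y ^ ?n] => is_var n; let p := fresh "p" in set (p := y ^ n) in * end.

Ltac rsimpl := repeat match goal with
  | |- context [minus ?u ?v] => change (minus u v) with (Rminus u v)
  | |- context [plus ?u ?v] => change (plus u v) with (Rplus u v)
  | |- context [scal ?u ?v] => change (scal u v) with (Rmult u v)
  | |- context [opp ?u] => change (opp u) with (Ropp u)
  end; try match goal with |- @eq _ ?u ?v => change (@eq R u v) end.

Lemma cont_poly a b x : continuous (fun x => x^a * (1-x)^b) x.
Proof. apply (ex_derive_continuous (K:=R_AbsRing) (V:=R_NormedModule)). auto_derive. auto. Qed.

Lemma beta_int a b : is_RInt (fun x => x^a * (1-x)^b) 0 1
   (INR (fact a) * INR (fact b) / INR (fact (a+b+1))).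
Proof.
  revert a; induction b as [|b IH]; intros a.
  - pose proof (is_RInt_derive (fun x => x^(S a) / INR (S a)) (fun x => x^a * (1-x)^0) 0 1) as H.
    replace (INR (fact a) * INR (fact 0) / INR (fact (a + 0 + 1)))
      with (minus (1^(S a) / INR (S a)) (0^(S a)/ INR (S a))).
    apply H.
    + intros x _. auto_derive. auto. rewrite pow_O. change (pred (S a)) with a. change (match a with 0%nat => 1 | S _ => INR a + 1 end) with (INR (S a)). field. apply not_0_INR; lia.
    + intros x _. apply cont_poly.
    + rewrite pow1, pow_i by lia. unfold minus, plus, opp; simpl.
      replace (a+0+1)%nat with (S a) by lia. change (fact (S a)) with (S a * fact a)%nat.
      rewrite mult_INR. pose proof (INR_fact_neq_0 a). pose proof (pos_INR a). change (match a with 0%nat => 1 | S _ => INR a + 1 end) with (INR (S a)). rewrite S_INR. field. lra.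
  - set (c := INR (S b) / INR (S a)).
    pose proof (is_RInt_derive (fun x => x^(S a) * (1-x)^(S b) / INR (S a))
      (fun x => x^a * (1-x)^(S b) - c * (x^(S a) * (1-x)^b)) 0 1) as H.
    assert (Hd : forall x, Rmin 0 1 <= x <= Rmax 0 1 -> is_derive (fun x => x^(S a) * (1-x)^(S b) / INR (S a)) x
       (x^a * (1-x)^(S b) - c * (x^(S a) * (1-x)^b))).
    { intros x _. auto_derive. auto. unfold c. simpl pred. rewrite !S_INR.
        pose proof (pos_INR a). fixINR. abspow. field. lra. }
    assert (Hc : forall x, Rmin 0 1 <= x <= Rmax 0 1 -> continuous (fun x => x^a * (1-x)^(S b) - c * (x^(S a) * (1-x)^b)) x).
    { intros x _. apply (ex_derive_continuous (K:=R_AbsRing) (V:=R_NormedModule)). auto_derive. auto. }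
    pose proof (is_RInt_plus _ _ _ _ _ _ (H Hd Hc) (is_RInt_scal _ _ _ c _ (IH (S a)))) as H2.
    eapply is_RInt_ext; [| 
    replace (INR (fact a) * INR (fact (S b)) / INR (fact (a + S b + 1))) with
        (plus (minus (1 ^ S a * (1 - 1) ^ S b / INR (S a)) (0 ^ S a * (1 - 0) ^ S b / INR (S a)))
              (scal c (INR (fact (S a)) * INR (fact b) / INR (fact (S a + b + 1)))));
      [apply H2|]].
    + intros x _. unfold plus, scal; simpl. unfold mult; simpl. ring.
    + rsimpl. unfold c. replace (1-1) with 0 by ring. rewrite !pow_i by lia.
        replace (S a + b + 1)%nat with (a + S b + 1)%nat by lia.
        pose proof (INR_fact_neq_0 (a + S b + 1)). pose proof (pos_INR a).
        change (fact (S a)) with (S a * fact a)%nat. change (fact (S b)) with (S b * fact b)%nat.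
        rewrite !mult_INR, !S_INR. field. lra.
Qed.

Definition uu x := -((1-x)^3)/8.
Definition ww x := -(x*(1-x)^3)/8.
Definition MM w := 26975*(1+w) - 17111*(1-w) + 2968*(1-w)^2.
Definition ff x := uu x * MM (ww x) / (1 - ww x)^3.
Definition Rp x := -259520 - 154160*x + 339288*x^2 - 304224*x^3 + 115280*x^4 - 24144*x^5 + 10968*x^6 - 2016*x^7.
Definition qq x := 8 + x*(1-x)^3.
Definition HH x := Rp x / (qq x)^2 - 120 * ln (1+x) - 712 * ln (qq x).

Lemma qq_pos x : 0 <= x <= 1 -> 0 < qq x.
Proof. intros. unfold qq. assert (0 <= x*(1-x)^3) by (apply Rmult_le_pos; [lra| apply pow_le; lra]). lra. Qed.

Lemma HH_der x : 0 <= x <= 1 -> is_derive HH x (ff x).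
Proof.
  intros Hx. pose proof (qq_pos x Hx) as Hq. unfold qq in Hq.
  unfold HH, qq, Rp. auto_derive.
  - repeat split; try lra; intro Z; nra.
  - unfold ff, uu, ww, MM. field. split; [|lra]. 
    intro Z. nra.
Qed.

Definition PP (k : R) := 26975*k^2 - 17111*k + 2968.
Definition QQ (r w : R) := PP r * (1-w)^2 + (2*26975*r - 17111)*w*(1-w) + 26975*w*(1+w).



Lemma term_val j : scal (PP (INR (S j)) * (-1/8)^(S j))
   (INR (fact j) * INR (fact (3 * S j)) / INR (fact (j + 3 * S j + 1))) = term (S j).
Proof.
  unfold term, Binomial.C, PP. rsimpl.
  replace (4 * S j - S j)%nat with (3 * S j)%nat by lia.
  replace (j + 3 * S j + 1)%nat with (4 * S j)%nat by lia.
  change (fact (S j)) with (S j * fact j)%nat. rewrite mult_INR.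
  replace (-1/8) with (/ -8) by field. rewrite pow_inv.
  pose proof (INR_fact_neq_0 j). pose proof (INR_fact_neq_0 (3 * S j)).
  pose proof (INR_fact_neq_0 (4 * S j)).
  assert ((-8)^(S j) <> 0) by (apply pow_nonzero; lra).
  assert (INR (S j) <> 0) by (apply not_0_INR; lia).
  field. repeat split; auto.
Qed.

Lemma term_int j : is_RInt (fun x => PP (INR (S j)) * (-1/8)^(S j) * (x^j * (1-x)^(3*S j))) 0 1 (term (S j)).
Proof.
  rewrite <- term_val.
  eapply is_RInt_ext; [| apply (is_RInt_scal _ _ _ (PP (INR (S j)) * (-1/8)^(S j)) _ (beta_int j (3 * S j)))].
  intros x _. reflexivity.
Qed.

Lemma g_eq j x : PP (INR (S j)) * (-1/8)^(S j) * (x^j * (1-x)^(3*S j)) = uu x * (PP (INR (S j)) * (ww x)^j).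
Proof.
  unfold uu, ww.
  replace (-(x*(1-x)^3)/8) with ((-1/8) * (x * (1-x)^3)) by field.
  rewrite !Rpow_mult_distr, pow_mult. change (((1-x)^3)^(S j)) with ((1-x)^3 * ((1-x)^3)^j). change ((-1/8)^(S j)) with (-1/8 * (-1/8)^j).
  set (a := (-1/8)^j). set (b := x^j). set (c := ((1-x)^3)^j). set (d := PP (INR (S j))).
  field.
Qed.

Lemma psum n w : sum_n (fun j => PP (INR (S j)) * w^j) n * (1-w)^3 = MM w - w^(S n) * QQ (INR n + 2) w.
Proof.
  induction n as [|n IH].
  - rewrite sum_O. rsimpl. change (INR 1) with 1. change (INR 0) with 0. unfold QQ, PP, MM. ring.
  - rewrite sum_Sn. rsimpl. rewrite Rmult_plus_distr_r, IH.
    change (w ^ S (S n)) with (w * w ^ S n). set (W := w ^ S n). 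
    change (w ^ S n) with W.
    rewrite !S_INR. unfold QQ, PP. ring.
Qed.

Lemma is_RInt_sum_n (g : nat -> R -> R) (I : nat -> R) n :
  (forall j, is_RInt (g j) 0 1 (I j)) ->
  is_RInt (fun x => sum_n (fun j => g j x) n) 0 1 (sum_n I n).
Proof.
  intros Hg. induction n as [|n IH].
  - rewrite sum_O. eapply is_RInt_ext; [|apply (Hg 0%nat)]. intros x _. rewrite sum_O. reflexivity.
  - rewrite sum_Sn. eapply is_RInt_ext; [|apply (is_RInt_plus _ _ _ _ _ _ IH (Hg (S n)))].
    intros x _. rewrite sum_Sn. reflexivity.
Qed.

Lemma int_f : is_RInt ff 0 1 (-297 - 120 * ln 2).
Proof.
  replace (-297 - 120 * ln 2) with (minus (HH 1) (HH 0)).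
  - apply (is_RInt_derive (V:=R_CompleteNormedModule)).
    + intros x Hx. rewrite Rmin_left, Rmax_right in Hx by lra. apply HH_der; lra.
    + intros x Hx. rewrite Rmin_left, Rmax_right in Hx by lra.
      apply (ex_derive_continuous (K:=R_AbsRing) (V:=R_NormedModule)).
      unfold ff, uu, ww, MM. auto_derive.
      assert (0 <= x*(1-x)^3) by (apply Rmult_le_pos; [lra| apply pow_le; lra]).
      intro Z. nra.
  - rsimpl. unfold HH, qq, Rp.
    replace (8 + 1 * (1 - 1) ^ 3) with 8 by ring. replace (8 + 0 * (1 - 0) ^ 3) with 8 by ring.
    replace (1 + 0) with 1 by ring. replace (1 + 1) with 2 by ring. rewrite ln_1. field.
Qed.

Definition err n x := uu x / (1 - ww x)^3 * ((ww x)^(S n) * QQ (INR n + 2) (ww x)).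

Lemma w_bounds x : 0 <= x <= 1 -> -(27/2048) <= ww x <= 0.
Proof.
  intros Hx. unfold ww.
  assert (E : 27/256 - x*(1-x)^3 = (x-1/4)^2*((x-5/4)^2+1/8)) by field.
  assert (0 <= (x-1/4)^2*((x-5/4)^2+1/8)) by (apply Rmult_le_pos; [apply pow2_ge_0| pose proof (pow2_ge_0 (x-5/4)); lra]).
  assert (0 <= x*(1-x)^3) by (apply Rmult_le_pos; [lra| apply pow_le; lra]).
  split; lra.
Qed.

Lemma div_aux (s m d : R) : d <> 0 -> s * d = m -> s = m / d.
Proof. intros Hd <-. field. auto. Qed.

Lemma psum_x n x : 0 <= x <= 1 ->
  sum_n (fun j => uu x * (PP (INR (S j)) * (ww x)^j)) n = ff x - err n x.
Proof.
  intros Hx. pose proof (w_bounds x Hx) as Hw.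
  rewrite (sum_n_mult_l (K:=R_Ring)). change (mult (uu x) ?s) with (uu x * s).
  pose proof (psum n (ww x)) as Hp.
  assert (Hne : (1 - ww x)^3 <> 0) by (apply pow_nonzero; lra).
  assert (Hs : sum_n (fun j => PP (INR (S j)) * (ww x)^j) n
     = (MM (ww x) - ww x ^ S n * QQ (INR n + 2) (ww x)) / (1 - ww x)^3).
  { apply div_aux; auto. }
  transitivity (uu x * ((MM (ww x) - ww x ^ S n * QQ (INR n + 2) (ww x)) / (1 - ww x)^3)).
  { f_equal. exact Hs. }
  unfold ff, err. match goal with |- @eq _ ?u ?v => change (@eq R u v) end. field. lra.
Qed.

Lemma two_pow n : INR n + 2 <= 2^(S n).
Proof.
  induction n as [|n IH].
  - simpl. lra.
  - rewrite S_INR. change (2^(S (S n))) with (2 * 2^(S n)).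
    pose proof (pow_R1_Rle 2 (S n)). lra.
Qed.

Lemma Q_bound r w : 2 <= r -> -(27/2048) <= w <= 0 -> Rabs (QQ r w) <= 200000 * r^2.
Proof.
  intros Hr Hw. unfold QQ.
  set (a := PP r). set (b := 2 * 26975 * r - 17111).
  assert (Ha : 0 <= a <= 30000 * r^2) by (unfold a, PP; nra).
  assert (Hb : 0 <= b <= 60000 * r^2) by (unfold b; nra).
  assert (He1 : 0 <= (1-w)^2 <= 2) by nra.
  assert (He2 : -1 <= w*(1-w) <= 0) by nra.
  assert (He3 : -1 <= w*(1+w) <= 0) by nra.
  replace (a * (1 - w) ^ 2 + b * w * (1 - w) + 26975 * w * (1 + w))
    with (a * (1 - w) ^ 2 + b * (w * (1 - w)) + 26975 * (w * (1 + w))) by ring.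
  apply Rabs_le. split; nra.
Qed.

Lemma err_bound n x : 0 <= x <= 1 -> Rabs (err n x) <= 25000 * (108/2048)^(S n).
Proof.
  intros Hx. pose proof (w_bounds x Hx) as Hw. unfold err.
  set (r := INR n + 2).
  assert (Hr : 2 <= r) by (unfold r; pose proof (pos_INR n); lra).
  assert (H1 : Rabs (uu x / (1 - ww x)^3) <= 1/8).
  { unfold uu. assert (Hd : 1 <= (1 - ww x)^3) by (apply pow_R1_Rle; lra).
    assert (Hc : 0 <= (1-x)^3 <= 1).
    { split; [apply pow_le; lra|]. rewrite <- (pow1 3). apply pow_incr. lra. }
    assert (Hi : 0 < / (1 - ww x)^3 <= 1).
    { split; [apply Rinv_0_lt_compat; lra|]. rewrite <- Rinv_1. apply Rinv_le_contravar; lra. }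
    replace (- (1 - x) ^ 3 / 8 / (1 - ww x) ^ 3) with (-((1-x)^3 * / (1 - ww x)^3)/8) by (unfold Rdiv; ring).
    apply Rabs_le. split; nra. }
  assert (H2 : Rabs (ww x ^ S n) <= (27/2048)^(S n)).
  { rewrite <- RPow_abs. apply pow_incr. split; [apply Rabs_pos|]. unfold Rabs; destruct (Rcase_abs (ww x)); lra. }
  pose proof (Q_bound r (ww x) Hr Hw) as H3.
  pose proof (two_pow n) as H4. fold r in H4.
  assert (H5 : r^2 <= 2^(S n) * 2^(S n)).
  { replace (2^(S n) * 2^(S n)) with ((2^(S n))^2) by ring. apply pow_incr. lra. }
  assert (E : (108/2048)^(S n) = 2^(S n) * 2^(S n) * (27/2048)^(S n)).
  { rewrite <- !Rpow_mult_distr. f_equal. field. }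
  rewrite E, !Rabs_mult.
  assert (Hp : 0 <= (27/2048)^(S n)) by (apply pow_le; lra).
  apply Rle_trans with (1/8 * ((27/2048)^(S n) * (200000 * r^2))).
  - apply Rmult_le_compat; try apply Rabs_pos; auto.
    + apply Rmult_le_pos; apply Rabs_pos.
    + apply Rmult_le_compat; try apply Rabs_pos; auto.
  - nra.
Qed.

Lemma psum_bound n : Rabs (sum_n (fun j => term (S j)) n - (-297 - 120 * ln 2)) <= 25000 * (108/2048)^(S n).
Proof.
  set (V := -297 - 120 * ln 2).
  assert (HS : is_RInt (fun x => sum_n (fun j => uu x * (PP (INR (S j)) * (ww x)^j)) n) 0 1
                 (sum_n (fun j => term (S j)) n)).
  { apply (is_RInt_sum_n (fun j x => uu x * (PP (INR (S j)) * (ww x)^j)) (fun j => term (S j))).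
    intros j. eapply is_RInt_ext; [|apply term_int]. intros x _. apply g_eq. }
  assert (HS2 : is_RInt (fun x => ff x - err n x) 0 1 (sum_n (fun j => term (S j)) n)).
  { eapply is_RInt_ext; [|apply HS]. intros x Hx. rewrite Rmin_left, Rmax_right in Hx by lra.
    apply psum_x. lra. }
  pose proof (is_RInt_minus _ _ _ _ _ _ int_f HS2) as HE.
  assert (HE2 : is_RInt (err n) 0 1 (minus V (sum_n (fun j => term (S j)) n))).
  { eapply is_RInt_ext; [|apply HE]. intros x _. cbv beta. rsimpl. ring. }
  pose proof (norm_RInt_le_const (V:=R_NormedModule) (err n) 0 1 _ (25000 * (108/2048)^(S n)) ltac:(lra) (fun x Hx => err_bound n x Hx) HE2) as HN2.
  change (norm (minus V ?s)) with (Rabs (V - s)) in HN2.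
  rewrite Rabs_minus_sym. lra.
Qed.

Theorem lemma3p2 :
  is_series (fun n : nat => term (S n)) (-297 - 120 * ln 2).
Proof.
  set (V := -297 - 120 * ln 2).
  set (B := fun n : nat => 25000 * (108/2048)^(S n)).
  assert (HB : is_lim_seq B 0).
  { apply is_lim_seq_ext with (fun n => (25000 * (108/2048)) * (108/2048)^n).
    - intros n. unfold B. simpl. ring.
    - replace (Finite 0) with (Rbar_mult (25000 * (108/2048)) 0) by (simpl; f_equal; ring).
      apply is_lim_seq_scal_l. apply is_lim_seq_geom. rewrite Rabs_pos_eq; lra. }
  assert (H : is_lim_seq (sum_n (fun n => term (S n))) V).
  { apply is_lim_seq_le_le with (fun n => V - B n) (fun n => V + B n).
    - intros n. pose proof (psum_bound n) as Hn. fold V in Hn. unfold B.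
      apply Rabs_le_between' in Hn. lra.
    - replace (Finite V) with (Finite (V - 0)) by (f_equal; ring).
      apply is_lim_seq_minus'; [apply is_lim_seq_const | exact HB].
    - replace (Finite V) with (Finite (V + 0)) by (f_equal; ring).
      apply is_lim_seq_plus'; [apply is_lim_seq_const | exact HB]. }
  exact H.
Qed.
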